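(* Let the graph inverse semigroup $G(T)$ of the unary tree $T$ be a dense subsemigroup of a CLP-compact topological semigroup $S$. Then for every open neighborhood $U$ of $0$ in $S$ there exists $n\in\omega$ such that $L_k\subset U$ for every $k>n$.
   Context: All spaces are Hausdorff; CLP-compact means every cover by clopen sets has a finite subcover. The unary tree $T$ has vertex set $\omega$ and edges $(n,n+1)$ with source $n$ and range $n+1$. For $k\le p$, $(k,p)$ denotes the unique path from $k$ to $p$ (with $(n,n)$ the vertex $n$). The graph inverse semigroup $G(T)$ is the semigroup with zero $0$ generated by the vertices, the edges and formal inverses $e^{-1}$ of edges subject to: for vertices $a,b$: $ab=a$ if $a=b$, else $0$; for edges $e,f$: $s(e)e=er(e)=e$, $e^{-1}s(e)=r(e)e^{-1}=e^{-1}$, $e^{-1}f=r(e)$ if $e=f$, else $0$. For $n\in\omega$, $L_n=\{(n,m)(n,m)^{-1}\mid m\ge n\}\cup\{0\}$. *)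

(* Defs.v *)
From HB Require Import structures.
From mathcomp Require Import all_boot.
From mathcomp Require Import all_classical topology.
Set Implicit Arguments. Unset Strict Implicit. Unset Printing Implicit Defensive.
Local Open Scope classical_set_scope.

(* Nonzero elements of G(T) in normal form (a,c)(b,c)^{-1}, a,b <= c,
   where (k,p) is the path from k to p in the unary tree. *)
Record gtel := GTel { ga : nat; gb : nat; gc : nat;
                      gac : (ga <= gc)%N; gbc : (gb <= gc)%N }.

(* G(T): None is the zero 0 *)
Definition GT := option gtel.

(* (a,c)(b,c)^{-1} * (a',c')(b',c')^{-1} = (a, max c c')(b', max c c')^{-1}
   if b = a', and 0 otherwise (standard multiplication of graph inverse
   semigroups specialised to the unary tree). *)
Definition gmul (x y : GT) : GT :=
  match x, y with
  | Some u, Some v =>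
      if gb u == ga v then
        Some (@GTel (ga u) (gb v) (maxn (gc u) (gc v))
                (leq_trans (gac u) (leq_maxl _ _))
                (leq_trans (gbc v) (leq_maxr _ _)))
      else None
  | _, _ => None
  end.

(* the path (k,p), k <= p, as an element of G(T): (k,p) (p,p)^{-1} *)
Definition gpath (k p : nat) (h : (k <= p)%N) : GT :=
  Some (@GTel k p p h (leqnn p)).
(* its formal inverse (k,p)^{-1} = (p,p)(k,p)^{-1} *)
Definition gpath_inv (k p : nat) (h : (k <= p)%N) : GT :=
  Some (@GTel p k p (leqnn p) h).

Definition gvertex (n : nat) : GT := gpath (leqnn n).
Definition gedge (n : nat) : GT := gpath (leqnSn n).
Definition gedge_inv (n : nat) : GT := gpath_inv (leqnSn n).

Definition Lset (n : nat) : set GT :=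
  [set x | x = None \/ exists m (h : (n <= m)%N), x = gmul (gpath h) (gpath_inv h)].

Definition clp_compact (S : topologicalType) : Prop :=
  forall C : set (set S),
    (forall A, C A -> open A /\ closed A) ->
    \bigcup_(A in C) A = setT ->
    exists2 D : set (set S), finite_set D /\ D `<=` C & \bigcup_(A in D) A = setT.

Definition topological_semigroup (S : topologicalType) (mul : S -> S -> S) : Prop :=
  hausdorff_space S /\
  (forall x y z, mul x (mul y z) = mul (mul x y) z) /\
  continuous (fun p : S * S => mul p.1 p.2).

(* Main.v *)
Require Import Defs.
From HB Require Import structures.
From mathcomp Require Import all_boot.
From mathcomp Require Import all_classical topology.
From mathcomp Require Import zify.
Local Open Scope classical_set_scope.

Definition eid k m : GT := Some (@GTel k k (maxn k m) (leq_maxl k m) (leq_maxl k m)).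

Lemma gtelE (u v : gtel) : ga u = ga v -> gb u = gb v -> gc u = gc v -> u = v.
Proof.
case: u => a b c h1 h2; case: v => a' b' c' h1' h2' /= ea eb ec.
subst; congr GTel; exact: eq_irrelevance.
Qed.

Lemma F1 k m t : gmul (gmul (eid k m) (Some t)) (eid k m) =
  if (ga t == k) && (gb t == k) then eid k (maxn m (gc t)) else None.
Proof.
case: t => a b c ha hb /=; rewrite /eid /gmul /=.
case: (eqVneq k a) => [ka|ka] /=; last by [].
subst a.
case: ifP => // _; congr Some; apply: gtelE => //=; lia.
Qed.

Lemma F2 k m m' : gmul (eid k m) (eid k m') = eid k (maxn m m').
Proof. rewrite /gmul /eid /= eqxx; congr Some; apply: gtelE => //=; lia. Qed.

Lemma F3 k k' m m' : k <> k' -> gmul (eid k m) (eid k' m') = None.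
Proof. by move=> /eqP kk; rewrite /gmul /eid /= (negbTE kk). Qed.

Lemma F4 k m (h : (k <= m)%N) : gmul (gpath h) (gpath_inv h) = eid k m.
Proof. rewrite /gmul /gpath /gpath_inv /eid /= eqxx; congr Some; apply: gtelE => //=; lia. Qed.

Lemma F5 k m a b c ha hb : eid k m = Some (@GTel a b c ha hb) -> a = k /\ b = k /\ c = maxn k m.
Proof. by case=> -> -> ->. Qed.

Section Top.
Variables (S : topologicalType) (mul : S -> S -> S).
Hypothesis hc : continuous (fun p : S * S => mul p.1 p.2).

Lemma contP a y A : nbhs (mul a y) A ->
  exists P Q, [/\ nbhs a P, nbhs y Q & forall s t, P s -> Q t -> A (mul s t)].
Proof.
move=> /(hc (a, y)) /= [[P Q] [Pa Qy] PQ]; exists P, Q; split => // s t Ps Qt.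
exact: (PQ (s, t)).
Qed.

Lemma contL a y A : nbhs (mul a y) A -> nbhs y [set t | A (mul a t)].
Proof.
move=> /contP [P [Q [Pa Qy PQ]]]; apply: filterS Qy => t Qt.
exact: PQ (nbhs_singleton Pa) Qt.
Qed.

Lemma contR a y A : nbhs (mul y a) A -> nbhs y [set t | A (mul t a)].
Proof.
move=> /contP [P [Q [Py Qa PQ]]]; apply: filterS Py => t Pt.
exact: PQ Pt (nbhs_singleton Qa).
Qed.
End Top.
Section Iso.
Variables (S : topologicalType) (mul : S -> S -> S) (emb : GT -> S).
Hypothesis hS : hausdorff_space S.
Hypothesis hc : continuous (fun p : S * S => mul p.1 p.2).
Hypothesis inj : injective emb.
Hypothesis hom : forall x y : GT, emb (gmul x y) = mul (emb x) (emb y).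
Hypothesis dense : closure (range emb) = setT.

Lemma nbhsC1 {x y : S} : x <> y -> nbhs x (~` [set y]).
Proof.
move=> xy; have := @accessible_closed_set1 _ (hausdorff_accessible hS) y.
rewrite -openC => op; apply: open_nbhs_nbhs; split => //.
Qed.

Lemma sep {x y : S} : x <> y -> exists A B, [/\ nbhs x A, nbhs y B & forall t, A t -> B t -> False].
Proof.
move=> xy; apply: contrapT => H; apply: xy; apply: hS => A B nA nB.
apply: contrapT => nE; apply: H; exists A, B; split => // t At Bt; apply: nE; exists t.
by split.
Qed.

Lemma excl (x : S) (p : nat -> S) (P : nat -> Prop) n :
  (forall r, (r < n)%N -> P r -> x <> p r) ->
  nbhs x [set y | forall r, (r < n)%N -> P r -> y <> p r].
Proof.
elim: n => [|n IH] H.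
  by apply: filterE => y r.
have /IH IH' : forall r, (r < n)%N -> P r -> x <> p r.
  by move=> r rn; apply: H; apply: ltn_trans rn _.
have [Pn|nPn] := pselect (P n).
  have := nbhsC1 (H n (ltnSn n) Pn) => Hn.
  apply: filterS (filterI IH' Hn) => y [Hy1 Hy2] r; rewrite ltnS leq_eqVlt.
  case/orP => [/eqP -> _ yp|]; [exact: Hy2 yp|exact: Hy1].
apply: filterS IH' => y Hy r; rewrite ltnS leq_eqVlt.
case/orP => [/eqP -> //|]; exact: Hy.
Qed.

Lemma iso k m : (k <= m)%N -> nbhs (emb (eid k m)) [set emb (eid k m)].
Proof.
move=> km.
set e := emb (eid k m); set f := emb (eid k m.+1); set z := emb None.
have ef : e <> f by move/inj => [] ; lia.
have [Ae [Af [nAe nAf dis]]] := sep ef.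
have ez : e <> z by move/inj.
pose Ve := Ae `&` ~` [set z].
have ee : mul (mul e e) e = e by rewrite -!hom !F2 !maxnn.
pose M1 := [set y | Ve (mul (mul e y) e)].
have N1 : nbhs e M1.
  have : nbhs (mul (mul e e) e) Ve by rewrite ee; apply: filterI nAe (nbhsC1 ez).
  by move=> /(@contR _ _ hc) /(@contL _ _ hc).
pose M2 := [set y | Af (mul f (mul (mul e y) e))].
have N2 : nbhs e M2.
  have : mul f (mul (mul e e) e) = f.
    by rewrite -!hom !F2; congr emb; congr eid; lia.
  move=> fe; have : nbhs (mul f (mul (mul e e) e)) Af by rewrite fe.
  by move=> /(@contL _ _ hc) /(@contR _ _ hc) /(@contL _ _ hc).
pose M3 := [set y | forall r, (r < m)%N -> (k <= r)%N -> y <> emb (eid k r)].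
have N3 : nbhs e M3.
  apply: excl => r rm kr /inj [] /eqP; lia.
have core : forall g, (M1 `&` M2 `&` M3) (emb g) -> emb g = e.
  case => [t|] [[H1 H2] H3]; last first.
    by move: H1; rewrite /M1 /= -!hom /= => -[_] H; exfalso; apply: H.
  move: H1 H2; rewrite /M1 /M2 /= -!hom F1.
  case Hab: ((ga t == k) && (gb t == k)); last by move=> [_ H]; exfalso; apply: H.
  move: Hab => /andP[/eqP ta /eqP tb].
  rewrite F2 => H1 H2.
  have tE : Some t = eid k (gc t).
    congr Some; apply: gtelE => //=; have := gac t; lia.
  case: (ltngtP m (gc t)) => mc.
  - have E1 : maxn m (gc t) = gc t by lia.
    have E2 : maxn m.+1 (maxn m (gc t)) = gc t by lia.
    rewrite E2 in H2; rewrite E1 in H1; by case: (dis _ H1.1 H2).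
  - exfalso; apply: (H3 (gc t)) => //; first by have := gac t; lia.
    by rewrite tE.
  - by rewrite tE -mc.
have nN : nbhs e (M1 `&` M2 `&` M3) by apply: filterI => //; apply: filterI.
apply: (filterS _ (nbhs_interior nN)) => y yN.
apply: hS => A B nA nB.
have yc : closure (range emb) y by rewrite dense.
have [_ [[g _ <-] [Ag Ng]]] := yc _ (filterI nA yN).
have ge := core g Ng.
exists e; split; first by rewrite -ge.
exact: nbhs_singleton nB.
Qed.
End Iso.

Theorem lemma4p6 (S : topologicalType) (mul : S -> S -> S) (emb : GT -> S) :
  topological_semigroup mul ->
  clp_compact S ->
  injective emb ->
  (forall x y : GT, emb (gmul x y) = mul (emb x) (emb y)) ->
  closure (range emb) = setT ->
  forall U : set S, open U -> U (emb None) ->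
  exists n : nat, forall k : nat, (n < k)%N -> emb @` Lset k `<=` U.
Proof.
move=> [hS [assoc hc]] clp inj hom dense U oU U0.
apply: contrapT => Hn.
have H1 : forall n, exists p : nat * nat,
    [/\ (n < p.1)%N, (p.1 <= p.2)%N & ~ U (emb (eid p.1 p.2))].
  move=> n; apply: contrapT => H2; apply: Hn; exists n => k nk _ [x Lx <-].
  case: Lx => [->|[m [h ->]]] //.
  rewrite F4; apply: contrapT => nU; apply: H2; by exists (k, m).
have [fn Hf] := choice H1.
pose kk := fun i => iter i (fun p => fn p.1) (fn 0%N).
have kkS : forall i, kk i.+1 = fn (kk i).1 by [].
have Hkk : forall i, ((kk i).1 <= (kk i).2)%N /\ ~ U (emb (eid (kk i).1 (kk i).2)).
  case => [|i]; first by case: (Hf 0%N).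
  by rewrite kkS; case: (Hf (kk i).1).
have inc : forall i, ((kk i).1 < (kk i.+1).1)%N.
  by move=> i; rewrite kkS; case: (Hf (kk i).1).
have mono : forall i j, (i < j)%N -> ((kk i).1 < (kk j).1)%N.
  move=> i; elim => // j IH; rewrite ltnS leq_eqVlt => /orP[/eqP -> | /IH h].
    exact: inc.
  exact: ltn_trans h (inc j).
have kinj : forall i j, i <> j -> (kk i).1 <> (kk j).1.
  move=> i j ij; case: (ltngtP i j) => [/mono|/mono|//]; lia.
pose b i := emb (eid (kk i).1 (kk i).2).
have bidem : forall i, mul (b i) (b i) = b i by move=> i; rewrite /b -hom F2 maxnn.
have borth : forall i j, i <> j -> mul (b i) (b j) = emb None.
  by move=> i j ij; rewrite /b -hom F3 //; exact: kinj.
have binj : injective b.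
  move=> i j bij; apply: contrapT => ij; have := borth i j ij.
  by rewrite bij bidem => /inj.
have biso : forall i, nbhs (b i) [set b i].
  by move=> i; exact: (@iso _ _ _ hS hc inj hom dense _ _ (Hkk i).1).
have nC1 : forall x y : S, x <> y -> nbhs x (~` [set y]).
  by move=> x y; exact: (@nbhsC1 _ hS).
pose B := range b.
have Bcl : closed B.
  move=> s sB; apply: contrapT => nBs.
  have two : forall W, nbhs s W -> exists i j, [/\ i <> j, W (b i) & W (b j)].
    move=> W nW; have [_ [[i _ <-] Wi]] := sB W nW.
    have bis : s <> b i by move=> E; apply: nBs; exists i.
    have [_ [[j _ <-] [Wj Cj]]] := sB _ (filterI nW (nC1 _ _ bis)).
    exists i, j; split => // ij; apply: Cj; by rewrite ij.
  have sz : mul s s = emb None.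
    apply: hS => A C nA nC; exists (emb None); split; last exact: nbhs_singleton nC.
    have [P [Q [nP nQ PQ]]] := @contP _ _ hc _ _ _ nA.
    have [i [j [ij [Pi Qi] [Pj Qj]]]] := two _ (filterI nP nQ).
    rewrite -(borth i j ij); exact: PQ.
  have ss : mul s s = s.
    apply: hS => A C nA nC.
    have [P [Q [nP nQ PQ]]] := @contP _ _ hc _ _ _ nA.
    have [_ [[i _ <-] [[Pi Qi] Ci]]] := sB _ (filterI (filterI nP nQ) nC).
    exists (b i); split => //; rewrite -bidem; exact: PQ.
  have Us : nbhs s U by rewrite -ss sz; apply: open_nbhs_nbhs; split.
  have [_ [[i _ <-] Ui]] := sB _ Us.
  exact: (Hkk i).2 Ui.
have Bop : open B.
  rewrite openE => x [i _ <-].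
  by apply: (filterS _ (biso i)) => y ->; exists i.
pose C := [set A : set S | A = ~` B \/ exists i, A = [set b i]].
have Cco : forall A, C A -> open A /\ closed A.
  move=> A [->|[i ->]]; split.
  - by rewrite openC.
  - by rewrite closedC.
  - by rewrite openE => x ->; exact: biso.
  - exact: (@accessible_closed_set1 _ (hausdorff_accessible hS)).
have Ccov : \bigcup_(A in C) A = setT.
  apply/seteqP; split => // x _.
  have [[i _ <-]|nB] := pselect (B x).
    by exists [set b i] => //; right; exists i.
  by exists (~` B) => //; left.
have [D [fD DC] DT] := clp C Cco Ccov.
have Dall : forall i, D [set b i].
  move=> i; have : (\bigcup_(A in D) A) (b i) by rewrite DT.
  case=> A DA Ab; case: (DC _ DA) => [AB|[j Aj]].
    by exfalso; rewrite AB in Ab; apply: Ab; exists i.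
  by rewrite Aj in DA Ab; rewrite Ab.
apply: infinite_nat.
have := @finite_preimage _ _ D (fun i => [set b i]) _ fD.
have -> : (fun i => [set b i]) @^-1` D = setT.
  by apply/seteqP; split => // i _; exact: Dall.
apply.
move=> i j _ _ E; apply: binj; have : [set b i] (b i) by [].
by rewrite E.
Qed.
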